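(* Let $n\ge 2$ be an integer and let $p$ be a real polynomial of degree at most $n-2$ that is non-negative on $[-1,1]$ and satisfies $p(1)=1$. Then $$\max_{x\in[-1,1]}|(1-x)^2p(x)|\ \ge\ \frac{16}{n^2}\tan^2\!\left(\frac{\pi}{2n}\right).$$ Moreover, equality holds if and only if $$p(x)=S_{n-2}(x):=\frac{8}{n^2}\tan^2\!\left(\frac{\pi}{2n}\right)\frac{1}{(1-x)^2}\left(1+T_n\!\left(\frac{1+\cos(\pi/n)}{2}(x+1)-1\right)\right).$$
   Context: $T_n$ denotes the Chebyshev polynomial of the first kind of degree $n$, $T_n(\cos\theta)=\cos(n\theta)$. The expression defining $S_{n-2}$ is a polynomial (the singularity at $x=1$ is removable). *)

(* Defs.v *)
From HB Require Import structures.
From mathcomp Require Import all_boot all_order all_algebra.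
From mathcomp Require Import all_classical all_reals all_analysis.
Set Implicit Arguments. Unset Strict Implicit. Unset Printing Implicit Defensive.
Import Order.TTheory GRing.Theory Num.Theory.
Local Open Scope ring_scope.

(* Chebyshev polynomials of the first kind, via the standard recurrence
   T_0 = 1, T_1 = X, T_{n+2} = 2 X T_{n+1} - T_n  (so that T_n(cos t) = cos(n t)). *)
Fixpoint chebT_pair (R : nzRingType) (n : nat) : {poly R} * {poly R} :=
  match n with
  | 0%N => (1, 'X)
  | m.+1 => let: (a, b) := chebT_pair R m in (b, 2%:R *: 'X * b - a)
  end.

Definition chebT (R : nzRingType) (n : nat) : {poly R} := (chebT_pair R n).1.

(* S_{n-2}(x) = (8/n^2) tan^2(pi/(2n)) (1-x)^{-2} (1 + T_n(((1+cos(pi/n))/2)(x+1) - 1)),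
   realised as the exact polynomial quotient by (1-x)^2 = (X-1)^2. *)
Definition S_poly (R : realType) (n : nat) : {poly R} :=
  let c := 8 / (n%:R ^+ 2) * (tan (pi / (2 * n%:R))) ^+ 2 in
  let a := (1 + cos (pi / n%:R)) / 2 in
  (c *: (1 + (chebT R n \Po (a *: ('X + 1) - 1)))) %/ (('X - 1) ^+ 2).

(* Main.v *)
Require Import Defs.
From HB Require Import structures.
From mathcomp Require Import all_boot all_order all_algebra.
From mathcomp Require Import all_classical all_reals all_analysis.
From mathcomp Require Import ring lra zify.
Import Order.TTheory GRing.Theory Num.Theory.
Local Open Scope classical_set_scope.
Local Open Scope ring_scope.

Section Cheb.
Variable R : realType.

Fixpoint cheb2 (m : nat) : {poly R} * {poly R} :=
  match m with
  | 0%N => (1, 0)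
  | m'.+1 => let: (t, u) := cheb2 m' in
             ('X * t - (1 - 'X * 'X) * u, 'X * u + t)
  end.
Definition TT m := (cheb2 m).1.
Definition UU m := (cheb2 m).2.

Lemma TT_S m : TT m.+1 = 'X * TT m - (1 - 'X * 'X) * UU m.
Proof. by rewrite /TT /UU /=; case: (cheb2 m). Qed.
Lemma UU_S m : UU m.+1 = 'X * UU m + TT m.
Proof. by rewrite /TT /UU /=; case: (cheb2 m). Qed.
Lemma TT0 : TT 0 = 1. Proof. by []. Qed.
Lemma UU0 : UU 0 = 0. Proof. by []. Qed.

Lemma TT_SS m : TT m.+2 = 2%:R *: 'X * TT m.+1 - TT m.
Proof. rewrite !TT_S UU_S scaler_nat; ring. Qed.

Lemma chebT_TT m : chebT R m = TT m.
Proof.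
suff : chebT_pair R m = (TT m, TT m.+1) by rewrite /chebT => ->.
elim: m => [|m IH] /=.
  by rewrite TT_S TT0 UU0 mulr1 mulr0 subr0.
by rewrite IH TT_SS.
Qed.

Lemma TT_cos m t : (TT m).[cos t] = cos (m%:R * t) /\
                   (UU m).[cos t] * sin t = sin (m%:R * t).
Proof.
elim: m => [|m [IH1 IH2]].
  by rewrite TT0 UU0 !mul0r hornerC cos0 horner0 mul0r sin0.
have -> : m.+1%:R * t = m%:R * t + t by rewrite mulrSr mulrDl mul1r.
rewrite TT_S UU_S cosD sinD -IH1 -IH2 !hornerE.
split; last by ring.
have h := cos2Dsin2 t.
have -> : 1 - cos t * cos t = sin t ^+ 2 by rewrite -h; ring.
ring.
Qed.

Lemma deriv1' : (1 : {poly R})^`() = 0.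
Proof. by rewrite -polyC1 derivC. Qed.

Lemma TT_deriv m : (TT m)^`() = UU m *+ m /\
  (1 - 'X * 'X) * (UU m)^`() = 'X * UU m - TT m *+ m.
Proof.
elim: m => [|m [IH1 IH2]].
  by rewrite TT0 UU0 deriv1' deriv0; split; ring.
rewrite TT_S UU_S !(derivB, derivD, derivM, derivX, derivC, deriv1') IH1.
split; first by rewrite IH2; ring.
have -> : (1 - 'X*'X) * (1 * UU m + 'X * (UU m)^`() + UU m *+ m) =
  (1 - 'X*'X)*(UU m + UU m *+ m) + 'X * ((1 - 'X*'X) * (UU m)^`()) by ring.
rewrite IH2; ring.
Qed.

Lemma size_1XX : (size ((1 - 'X * 'X)%R : {poly R}) <= 3)%N.
Proof.
apply: (leq_trans (size_polyD _ _)); rewrite geq_max size_poly1 size_polyN /=.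
by apply: (leq_trans (size_polyMleq _ _)); rewrite size_polyX.
Qed.

Lemma TT_size m : (size (TT m) <= m.+1)%N /\ (size (UU m) <= m)%N.
Proof.
elim: m => [|m [IH1 IH2]]; first by rewrite TT0 UU0 size_poly1 size_poly0.
rewrite TT_S UU_S; split.
  apply: (leq_trans (size_polyD _ _)); rewrite geq_max size_polyN; apply/andP; split.
    apply: (leq_trans (size_polyMleq _ _)); rewrite size_polyX; lia.
  apply: (leq_trans (size_polyMleq _ _)).
  have key : forall a b, (a <= 3 -> b <= m -> (a + b).-1 <= m.+2)%N by move=> *; lia.
  by apply: key => //; apply: size_1XX.
apply: (leq_trans (size_polyD _ _)); rewrite geq_max; apply/andP; split; last lia.
apply: (leq_trans (size_polyMleq _ _)); rewrite size_polyX; lia.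
Qed.
End Cheb.

Section Alt.
Variable R : realType.

Lemma sign_prod_neg (r : seq nat) (F : nat -> R) :
  (forall j, j \in r -> F j < 0) -> 0 < (-1) ^+ size r * \prod_(j <- r) F j.
Proof.
elim: r => [|j r IH] H; first by rewrite big_nil expr0 mulr1.
rewrite big_cons /= exprS.
have Hj : F j < 0 by apply: H; rewrite mem_head.
have Hr : 0 < (-1) ^+ size r * \prod_(j0 <- r) F j0.
  by apply: IH => k hk; apply: H; rewrite inE hk orbT.
have -> : (-1) * (-1) ^+ size r * (F j * \prod_(j0 <- r) F j0) =
  (- F j) * ((-1) ^+ size r * \prod_(j0 <- r) F j0) by ring.
by apply: mulr_gt0 => //; rewrite oppr_gt0.
Qed.

Lemma alternation (m : nat) (t : nat -> R) (u : {poly R}) :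
  (forall i j, (i < j <= m)%N -> t j < t i) ->
  (size u <= m)%N ->
  (forall i, (i <= m)%N -> 0 <= (-1) ^+ i * u.[t i]) -> u = 0.
Proof.
move=> tdec su sg.
pose P i := \prod_(0 <= j < i) ('X - (t j)%:P) * \prod_(i.+1 <= j < m.+1) ('X - (t j)%:P).
pose w i := \prod_(0 <= j < i) (t i - t j) * \prod_(i.+1 <= j < m.+1) (t i - t j).
have tneq : forall i j, (i <= m)%N -> (j <= m)%N -> i != j -> t i != t j.
  move=> i j hi hj; case: (ltngtP i j) => // hij _.
  - by rewrite gt_eqF // tdec // hij hj.
  - by rewrite lt_eqF // tdec // hij hi.
have wpos : forall i, (i <= m)%N -> 0 < (-1) ^+ i * w i.
  move=> i hi; rewrite /w mulrA.
  apply: mulr_gt0.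
    have := sign_prod_neg (index_iota 0 i) (fun j => t i - t j).
    rewrite size_iota subn0; apply => j; rewrite mem_index_iota => /andP[_ hj].
    by rewrite subr_lt0 tdec // hj hi.
  rewrite big_seq_cond; apply: prodr_gt0 => j /andP[]; rewrite mem_index_iota => /andP[hj1 hj2] _.
  by rewrite subr_gt0 tdec // hj1 -ltnS hj2.
have wneq : forall i, (i <= m)%N -> w i != 0.
  move=> i hi; have := wpos i hi; apply: contraTneq => ->; by rewrite mulr0 ltxx.
have Pev : forall i k, (i <= m)%N -> (k <= m)%N -> (P i).[t k] = if i == k then w i else 0.
  move=> i k hi hk; rewrite /P hornerM !horner_prod.
  under eq_bigr do rewrite hornerXsubC.
  under [X in _ * X]eq_bigr do rewrite hornerXsubC.
  case: eqP => [<-|/eqP hik] //.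
  apply/eqP; rewrite mulf_eq0 !prodf_seq_eq0; apply/orP.
  case: (ltngtP k i) => hki; last by rewrite hki eqxx in hik.
    by left; apply/hasP; exists k; [rewrite mem_index_iota hki | rewrite /= subrr eqxx].
  by right; apply/hasP; exists k; [rewrite mem_index_iota hki ltnS hk | rewrite /= subrr eqxx].
pose L := \sum_(i < m.+1) (u.[t i] / w i) *: P i.
have Lsum : forall k, (k <= m)%N -> L.[t k] = u.[t k].
  move=> k hk; rewrite /L horner_sum (bigD1 (Ordinal (hk : (k < m.+1)%N))) //=.
  rewrite hornerZ Pev // eqxx divfK ?wneq //.
  rewrite big1 ?addr0 // => i hik.
  have hi : (i <= m)%N by rewrite -ltnS ltn_ord.
  rewrite hornerZ Pev //.
  case: eqP => [hik'|]; last by rewrite mulr0.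
  by move: hik; rewrite -val_eqE /= hik' eqxx.
have Pmonic : forall i, P i \is monic by move=> i; rewrite monicMl monic_prod_XsubC.
have Psize : forall i, (i <= m)%N -> size (P i) = m.+1.
  move=> i hi; rewrite /P size_Mmonic; first last.
  - by rewrite monic_prod_XsubC.
  - by rewrite monic_neq0 // monic_prod_XsubC.
  rewrite (size_prod_XsubC (index_iota 0 i) t) (size_prod_XsubC (index_iota i.+1 m.+1) t) !size_iota; lia.
have rsuniq : uniq (map t (iota 0 m.+1)).
  rewrite map_inj_in_uniq ?iota_uniq // => i j; rewrite !mem_iota !add0n !ltnS => hi hj /eqP.
  by apply: contraTeq => /(tneq _ _ hi hj).
have uL : u = L.
  apply/eqP; rewrite -subr_eq0; apply/eqP.
  apply: (@roots_geq_poly_eq0 _ _ (map t (iota 0 m.+1))) => //.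
  - apply/allP => y /mapP [k]; rewrite mem_iota add0n ltnS => hk ->.
    by rewrite /root hornerD hornerN Lsum // subrr.
  - rewrite size_map size_iota; apply: (leq_trans (size_polyD _ _)); rewrite size_polyN geq_max.
    apply/andP; split; first by apply: leq_trans su _.
    apply: (leq_trans (size_sum _ _ _)); apply/bigmax_leqP => i _.
    by apply: (leq_trans (size_scale_leq _ _)); rewrite Psize // -ltnS.
have coefL : L`_m = \sum_(i < m.+1) u.[t i] / w i.
  rewrite /L coef_sum; apply: eq_bigr => i _.
  rewrite coefZ; have /monicP := Pmonic i; rewrite lead_coefE Psize /= => [->|]; last by rewrite -ltnS ltn_ord.
  by rewrite mulr1.
have sum0 : \sum_(i < m.+1) u.[t i] / w i = 0 by rewrite -coefL -uL nth_default.
have term0 : forall i : 'I_m.+1, u.[t i] / w i = 0.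
  move=> i; apply: (psumr_eq0P _ sum0) => // j _.
  have hj : (j <= m)%N by rewrite -ltnS.
  have -> : u.[t j] / w j = ((-1) ^+ j * u.[t j]) / ((-1) ^+ j * w j).
    by field; rewrite signr_eq0 wneq.
  by apply: divr_ge0; [apply: sg | apply: ltW; apply: wpos].
apply: (@roots_geq_poly_eq0 _ _ (map t (iota 0 m.+1))) => //.
  apply/allP => y /mapP [k]; rewrite mem_iota add0n ltnS => hk ->.
  have := term0 (Ordinal (hk : (k < m.+1)%N)); rewrite /= => /eqP.
  by rewrite mulf_eq0 invr_eq0 (negbTE (wneq _ hk)) orbF.
by rewrite size_map size_iota; apply: leq_trans su _.
Qed.
End Alt.

Section DR.
Variable R : realType.
Lemma addLaw (a b : R) : Algebra.Algebra_add__canonical__SemiGroup_Law R a b = a + b.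
Proof. by []. Qed.
Lemma mulLaw (a b : R) : GRing.GRing_mul__canonical__SemiGroup_Law R a b = a * b.
Proof. by []. Qed.

Lemma double_root (G : {poly R}) : G.[1] = 0 -> G^`().[1] = 0 ->
  exists g, G = g * ('X - 1) ^+ 2 /\ G^`()^`().[1] = 2 * g.[1].
Proof.
move=> h0 h1.
have /factor_theorem [q hq] : root G 1 by apply/eqP.
have hq1 : root q 1.
  apply/eqP; move: h1; rewrite hq derivM derivXsubC !hornerE.
  by rewrite subrr mulr0 add0r.
have /factor_theorem [g hg] := hq1.
exists g; split; first by rewrite hq hg -mulrA -expr2.
rewrite hq hg !(derivXsubC, derivM, derivD, deriv1').
have e : forall a b : R, Algebra.Algebra_add__canonical__SemiGroup_Law R a b = a + b by [].
rewrite !hornerE subrr !e; ring.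
Qed.
End DR.

Section Main.
Variable R : realType.
Variable n : nat.
Hypothesis hn : (2 <= n)%N.

Definition hh : R := pi / (2 * n%:R).
Definition th : R := pi / n%:R.
Definition aa : R := (1 + cos th) / 2.
Definition cc : R := 8 / (n%:R ^+ 2) * (tan hh) ^+ 2.
Definition Lin : {poly R} := aa *: ('X + 1) - 1.
Definition FF : {poly R} := cc *: (1 + (chebT R n \Po Lin)).

Lemma S_polyE : S_poly R n = FF %/ (('X - 1) ^+ 2).
Proof. by []. Qed.

Lemma nR_gt0 : 0 < n%:R :> R.
Proof. by rewrite ltr0n; lia. Qed.
Lemma nR_ge2 : 2 <= n%:R :> R.
Proof. by rewrite (ler_nat R 2 n). Qed.
Lemma nR_neq0 : n%:R != 0 :> R.
Proof. by rewrite gt_eqF // nR_gt0. Qed.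

Lemma hh_n : hh * (2 * n%:R) = pi.
Proof. by rewrite /hh; field; rewrite nR_neq0. Qed.
Lemma th_hh : th = hh *+ 2.
Proof. by rewrite /th /hh; field; rewrite nR_neq0. Qed.

Lemma hh_bounds : 0 < hh /\ hh < pi / 2.
Proof.
have h1 := hh_n; have h2 := nR_ge2; have h3 := pi_gt0 R.
split; nra.
Qed.

Lemma th_bounds : 0 < th /\ th < pi.
Proof. have [? ?] := hh_bounds; rewrite th_hh; split; lra. Qed.

Lemma coshh_gt0 : 0 < cos hh.
Proof. have [? ?] := hh_bounds; apply: cos_gt0_pihalf; apply/andP; split; lra. Qed.
Lemma sinhh_gt0 : 0 < sin hh.
Proof. have [? ?] := hh_bounds; apply: sin_gt0_pihalf; apply/andP; split; lra. Qed.
Lemma sinth_gt0 : 0 < sin th.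
Proof. have [? ?] := th_bounds; apply: sin_gt0_pi; apply/andP; split; lra. Qed.

Lemma aa_cos : aa = cos hh ^+ 2.
Proof. by rewrite /aa th_hh cos_mulr2n; field. Qed.
Lemma sinth_hh : sin th = (cos hh * sin hh) *+ 2.
Proof. by rewrite th_hh sin_mulr2n. Qed.

Lemma aa_gt0 : 0 < aa.
Proof. by rewrite aa_cos exprn_gt0 // coshh_gt0. Qed.
Lemma aa_le1 : aa <= 1.
Proof. rewrite /aa; have := cos_le1 th; lra. Qed.

Lemma cc_ge0 : 0 <= cc.
Proof. by rewrite /cc mulr_ge0 // ?sqr_ge0 // divr_ge0 // sqr_ge0. Qed.

Lemma TTn_y0 : (TT R n).[cos th] = -1.
Proof.
have [-> _] := TT_cos R n th.
have -> : n%:R * th = pi by rewrite /th; field; rewrite nR_neq0.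
exact: cospi.
Qed.

Lemma UUn_y0 : (UU R n).[cos th] = 0.
Proof.
have [_ h] := TT_cos R n th.
have e : n%:R * th = pi by rewrite /th; field; rewrite nR_neq0.
move: h; rewrite e sinpi => /eqP; rewrite mulf_eq0 (gt_eqF sinth_gt0) orbF => /eqP //.
Qed.

Lemma TTd_y0 : (TT R n)^`().[cos th] = 0.
Proof. by have [-> _] := TT_deriv R n; rewrite hornerMn UUn_y0 mul0rn. Qed.

Lemma TTdd_y0 : (TT R n)^`()^`().[cos th] * sin th ^+ 2 = n%:R ^+ 2.
Proof.
have [-> h] := TT_deriv R n.
rewrite derivMn hornerMn sin2cos2.
have e := congr1 (fun q => q.[cos th]) h.
rewrite /= !hornerE hornerMn UUn_y0 TTn_y0 in e.
transitivity (n%:R * ((1 - cos th * cos th) * (UU R n)^`().[cos th])).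
  by rewrite -mulr_natr; ring.
by rewrite e -mulr_natr; ring.
Qed.

Lemma Lin_eval x : Lin.[x] = aa * (x + 1) - 1.
Proof. by rewrite /Lin !hornerE. Qed.
Lemma Lin_deriv : Lin^`() = aa%:P.
Proof. by rewrite /Lin derivB derivZ derivD derivX deriv1' subr0 addr0 alg_polyC. Qed.
Lemma Lin1 : Lin.[1] = cos th.
Proof. by rewrite Lin_eval /aa; field. Qed.
Lemma FF_eval x : FF.[x] = cc * (1 + (TT R n).[Lin.[x]]).
Proof. by rewrite /FF hornerZ hornerD horner_comp chebT_TT hornerC. Qed.
Lemma FF_d : FF^`() = cc *: (((TT R n)^`() \Po Lin) * aa%:P).
Proof. by rewrite /FF derivZ derivD deriv1' add0r deriv_comp Lin_deriv chebT_TT. Qed.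
Lemma FF_dd : FF^`()^`() = cc *: (((TT R n)^`()^`() \Po Lin) * aa%:P * aa%:P).
Proof. by rewrite FF_d derivZ derivM derivC mulr0 addr0 deriv_comp Lin_deriv. Qed.

Lemma FF1 : FF.[1] = 0.
Proof. by rewrite FF_eval Lin1 TTn_y0 subrr mulr0. Qed.
Lemma FFd1 : FF^`().[1] = 0.
Proof. by rewrite FF_d hornerZ hornerM horner_comp Lin1 TTd_y0 mul0r mulr0. Qed.
Lemma FFdd1 : FF^`()^`().[1] = 2.
Proof.
rewrite FF_dd hornerZ !hornerM horner_comp Lin1 hornerC.
have sn0 : sin th != 0 by rewrite gt_eqF // sinth_gt0.
have e : (TT R n)^`()^`().[cos th] = n%:R ^+ 2 / sin th ^+ 2.
  by rewrite -TTdd_y0; field.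
have c0 : cos hh != 0 by rewrite gt_eqF // coshh_gt0.
have s0 : sin hh != 0 by rewrite gt_eqF // sinhh_gt0.
move: sn0; rewrite e /cc /tan aa_cos sinth_hh => sn0.
field; rewrite ?nR_neq0 ?c0 ?s0 //.
Qed.

Lemma S_fact : FF = S_poly R n * ('X - 1) ^+ 2 /\ (S_poly R n).[1] = 1.
Proof.
have [g [hg hd]] := @double_root R FF FF1 FFd1.
have -> : S_poly R n = g.
  by rewrite S_polyE hg mulpK // expf_neq0 // -polyC1 polyXsubC_eq0.
split => //; move: hd; rewrite FFdd1 => hd.
have : 2 * (g.[1] - 1) = 0 by rewrite mulrBr -hd; ring.
by move/eqP; rewrite mulf_eq0 pnatr_eq0 /= subr_eq0 => /eqP.
Qed.

Lemma Lin_size : (size Lin <= 2)%N.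
Proof.
rewrite /Lin; apply: (leq_trans (size_polyD _ _)); rewrite geq_max size_polyN size_poly1 andbT.
apply: (leq_trans (size_scale_leq _ _)); apply: (leq_trans (size_polyD _ _)).
by rewrite geq_max size_polyX size_poly1.
Qed.

Lemma FF_size : (size FF <= n.+1)%N.
Proof.
rewrite /FF; apply: (leq_trans (size_scale_leq _ _)); apply: (leq_trans (size_polyD _ _)).
rewrite geq_max size_poly1 /=.
apply: (leq_trans (size_comp_poly_leq _ _)); rewrite chebT_TT.
have [h1 _] := TT_size R n; have h2 := Lin_size.
have : ((size (TT R n)).-1 * (size Lin).-1 <= n * 1)%N by apply: leq_mul; lia.
lia.
Qed.

Lemma S_size : (size (S_poly R n) <= n.-1)%N.
Proof.
have [e _] := S_fact; have := FF_size; rewrite e.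
case: (eqVneq (S_poly R n) 0) => [->|nz]; first by rewrite size_poly0.
have m2 : (('X - 1 : {poly R}) ^+ 2) \is monic by apply: monic_exp; apply: monicXsubC.
have s2 : size (('X - 1 : {poly R}) ^+ 2) = 3 by exact: size_exp_XsubC.
rewrite size_Mmonic // s2; lia.
Qed.

Definition yk k := cos (k%:R * th).
Definition xk k := (1 + yk k) / aa - 1.

Lemma cos_kpi k : cos (k%:R * pi) = (-1) ^+ k :> R.
Proof.
elim: k => [|k IH]; first by rewrite mul0r cos0 expr0.
by rewrite mulrSr mulrDl mul1r cosDpi IH exprS mulN1r.
Qed.

Lemma TT_yk k : (TT R n).[yk k] = (-1) ^+ k.
Proof.
have [-> _] := TT_cos R n (k%:R * th).
have -> : n%:R * (k%:R * th) = k%:R * pi by rewrite /th; field; rewrite nR_neq0.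
exact: cos_kpi.
Qed.

Lemma Lin_xk k : Lin.[xk k] = yk k.
Proof. by rewrite Lin_eval /xk; field; rewrite gt_eqF // aa_gt0. Qed.

Lemma FF_xk k : FF.[xk k] = cc * (1 + (-1) ^+ k).
Proof. by rewrite FF_eval Lin_xk TT_yk. Qed.

Lemma kth_in k : (k <= n)%N -> k%:R * th \in `[0, pi].
Proof.
move=> kn; rewrite in_itv /=.
have n0 := nR_gt0; have knR : k%:R <= n%:R :> R by rewrite ler_nat.
have e : k%:R * th * n%:R = k%:R * pi by rewrite /th; field; rewrite nR_neq0.
have := pi_gt0 R; have [? ?] := th_bounds; have k0 : 0 <= k%:R :> R by [].
move=> p0; apply/andP; split; nra.
Qed.

Lemma yk_lt k l : (k < l)%N -> (l <= n)%N -> yk l < yk k.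
Proof.
move=> kl ln; rewrite /yk ltr_cos ?kth_in //; last lia.
have [? _] := th_bounds; by rewrite ltr_pM2r // ltr_nat.
Qed.

Lemma xk_lt k l : (k < l)%N -> (l <= n)%N -> xk l < xk k.
Proof.
move=> kl ln; rewrite /xk ltrD2r ltr_pM2r ?invr_gt0 ?aa_gt0 // ltrD2l.
exact: yk_lt.
Qed.

Lemma xk_ge k : -1 <= xk k.
Proof.
have : 0 <= (1 + yk k) / aa.
  by rewrite divr_ge0 ?(ltW aa_gt0) //; have := cos_geN1 (k%:R * th); rewrite /yk; lra.
rewrite /xk; lra.
Qed.

Lemma costh_ge0 : 0 <= cos th.
Proof.
have [? ?] := hh_bounds.
have h4 : 4 * hh <= pi by have := hh_n; have := nR_ge2; nra.
apply: cos_ge0_pihalf; rewrite th_hh (mulr2n hh).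
apply/andP; split; lra.
Qed.

Lemma xk1 : xk 1 = 1.
Proof.
have c0 := costh_ge0.
rewrite /xk /yk mul1r /aa; field.
by rewrite gt_eqF //; lra.
Qed.

Lemma xk_lt1 k : (2 <= k <= n)%N -> xk k < 1.
Proof. by move=> /andP[k2 kn]; rewrite -xk1; apply: xk_lt. Qed.

Lemma FF_bounds x : -1 <= x <= 1 -> 0 <= FF.[x] <= 2 * cc.
Proof.
move=> /andP[x1 x2].
have a0 := aa_gt0; have a1 := aa_le1; have c0 := cc_ge0.
have hy : -1 <= Lin.[x] <= 1 by rewrite Lin_eval; apply/andP; split; nra.
have e : (TT R n).[Lin.[x]] = cos (n%:R * acos Lin.[x]).
  by rewrite -(TT_cos R n (acos Lin.[x])).1 acosK // in_itv.
rewrite FF_eval e.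
have := cos_geN1 (n%:R * acos Lin.[x]); have := cos_le1 (n%:R * acos Lin.[x]).
move=> ? ?; apply/andP; split; nra.
Qed.

Lemma main_sec (p : {poly R}) :
  (size p <= n.-1)%N ->
  (forall x : R, -1 <= x <= 1 -> 0 <= p.[x]) ->
  p.[1] = 1 ->
  let M := sup [set `|(1 - x) ^+ 2 * p.[x]| | x in `[(-1 : R), 1]] in
  let c := 16 / (n%:R ^+ 2) * (tan (pi / (2 * n%:R))) ^+ 2 in
  c <= M /\ (M = c <-> p = S_poly R n).
Proof.
move=> sp pnn p1; cbv zeta.
have -> : (16 / (n%:R ^+ 2) * (tan (pi / (2 * n%:R))) ^+ 2 : R) = 2 * cc.
  by rewrite /cc /hh; field; rewrite ?expf_neq0 ?nR_neq0.
set E := [set `|(1 - x) ^+ 2 * p.[x]| | x in `[(-1 : R), 1]].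
set M := sup E.
have inE' : forall x, -1 <= x <= 1 -> E `|(1 - x) ^+ 2 * p.[x]|.
  by move=> x hx; exists x => //=; rewrite in_itv /= hx.
pose B := 4 * \sum_(i < size p) `|p`_i|.
have Eub : forall y, E y -> y <= B.
  move=> _ [x hx <-]; move: hx; rewrite /= in_itv /= => /andP[x1 x2].
  rewrite normrM.
  have h1 : `|(1 - x) ^+ 2| <= 4 by rewrite ger0_norm ?sqr_ge0 //; nra.
  have h2 : `|p.[x]| <= \sum_(i < size p) `|p`_i|.
    rewrite horner_coef; apply: (le_trans (ler_norm_sum _ _ _)); apply: ler_sum => i _.
    rewrite normrM normrX -[X in _ <= X]mulr1; apply: ler_wpM2l => //.
    by apply: exprn_ile1 => //; rewrite ler_norml x1 x2.
  by apply: ler_pM.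
have hsup : has_sup E.
  split; first by exists `|(1 - 0) ^+ 2 * p.[0]|; apply: inE'; rewrite lerN10 ler01.
  by exists B => y Ey; apply: Eub.
have Mub : forall x, -1 <= x <= 1 -> `|(1 - x) ^+ 2 * p.[x]| <= M.
  by move=> x hx; apply: sup_upper_bound => //; apply: inE'.
have [FFe S1] := S_fact.
have claimC : M <= 2 * cc -> p = S_poly R n.
  move=> Mc; set g := S_poly R n.
  have /factor_theorem [v hv] : root (g - p) 1 by rewrite /root hornerD hornerN S1 p1 subrr.
  have sv : (size (- v)%R <= n - 2)%N.
    rewrite size_polyN; case: (eqVneq v 0) => [->|vnz]; first by rewrite size_poly0.
    have : (size (g - p)%R <= n.-1)%N.
      by apply: (leq_trans (size_polyD _ _)); rewrite geq_max size_polyN S_size sp.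
    rewrite hv size_Mmonic ?monicXsubC // size_XsubC.
    move=> h; have h' : ((size v + 2).-1 <= n.-1)%N by exact: h.
    lia.
  have key : forall x, FF.[x] - (1 - x) ^+ 2 * p.[x] = (x - 1) ^+ 3 * v.[x].
    move=> x; have e : g = v * ('X - 1%:P) + p by rewrite -hv subrK.
    rewrite FFe -/g e !hornerE ?mulLaw ?addLaw; ring.
  have v0 : - v = 0.
    apply: (@alternation R (n - 2) (fun i => xk (i + 2)) (- v)) => //.
      move=> i j /andP[ij jn]; apply: xk_lt; lia.
    move=> i hi; set k := (i + 2)%N.
    have hk : (2 <= k <= n)%N by rewrite /k; lia.
    have xkin : -1 <= xk k <= 1 by rewrite xk_ge (ltW (xk_lt1 _ hk)).
    have d3 : 0 < (1 - xk k) ^+ 3 by rewrite exprn_gt0 // subr_gt0 (xk_lt1 _ hk).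
    have K := key (xk k); rewrite FF_xk in K.
    have sgk : (-1) ^+ k = (-1) ^+ i :> R.
      by rewrite /k exprD expr2 mulrNN !mulr1.
    rewrite sgk in K; rewrite hornerN.
    have q0 : 0 <= (1 - xk k) ^+ 2 * p.[xk k] by rewrite mulr_ge0 ?sqr_ge0 ?pnn.
    have qM : (1 - xk k) ^+ 2 * p.[xk k] <= 2 * cc.
      by apply: le_trans Mc; apply: le_trans (Mub _ xkin); exact: ler_norm.
    have e3 : (xk k - 1) ^+ 3 = - (1 - xk k) ^+ 3 by ring.
    rewrite e3 in K.
    move: K q0 qM d3; set Q := (1 - xk k) ^+ 2 * p.[xk k]; set D := (1 - xk k) ^+ 3;
      set V := v.[xk k].
    rewrite -signr_odd; case: (odd i); rewrite ?expr0 ?expr1 => K q0 qM d3; nra.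
  have vz : v = 0 by rewrite -[v]opprK v0 oppr0.
  by move: hv; rewrite vz mul0r => /eqP; rewrite subr_eq0 => /eqP ->.
have claimB : p = S_poly R n -> M = 2 * cc.
  move=> pS.
  have q_eq : forall x, (1 - x) ^+ 2 * p.[x] = FF.[x].
    by move=> x; rewrite FFe pS !hornerE ?mulLaw ?addLaw; ring.
  apply/le_anti/andP; split.
    apply: ge_sup; first by exists `|(1 - 0) ^+ 2 * p.[0]|; apply: inE'; rewrite lerN10 ler01.
    move=> _ [x hx <-]; move: hx; rewrite /= in_itv /= => hx.
    by rewrite q_eq; have /andP[h1 h2] := FF_bounds x hx; rewrite ger0_norm.
  have hk : (2 <= 2 <= n)%N by rewrite leqnn hn.
  have x2in : -1 <= xk 2 <= 1 by rewrite xk_ge (ltW (xk_lt1 _ hk)).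
  have := Mub _ x2in; rewrite q_eq FF_xk expr2 mulrNN mulr1 ger0_norm.
    by move=> h; apply: le_trans h; rewrite -[1 + 1]/(2 : R) mulrC.
  by rewrite mulr_ge0 // ?cc_ge0.
split.
  case: (lerP (2 * cc) M) => // h.
  by have e := claimB (claimC (ltW h)); rewrite e ltxx in h.
by split => [e|e]; [apply: claimC; rewrite e | exact: claimB e].
Qed.

End Main.

Theorem proposition1p5 (R : realType) (n : nat) (p : {poly R}) :
  (2 <= n)%N ->
  (size p <= n.-1)%N ->
  (forall x : R, -1 <= x <= 1 -> 0 <= p.[x]) ->
  p.[1] = 1 ->
  let M := sup [set `|(1 - x) ^+ 2 * p.[x]| | x in `[(-1 : R), 1]] in
  let c := 16 / (n%:R ^+ 2) * (tan (pi / (2 * n%:R))) ^+ 2 in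
  c <= M /\ (M = c <-> p = S_poly R n).
Proof. by move=> hn; exact: (@main_sec R n hn p). Qed.
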